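(* For any tournament $\mathrel{W}$ and any ranking $R$ that is both $\mathrel{W}$-feasible and $\mathrel{W}$-efficient, there exists a regret-free strategy whose outcome under $\mathrel{W}$ is $R$.
   Context: Let $\mathcal{X}$ be a finite set of alternatives. A proto-ranking is an irreflexive and transitive binary relation on $\mathcal{X}$; a ranking is a total proto-ranking; a tournament is a total and asymmetric binary relation on $\mathcal{X}$. The chair has a fixed preference $\succ$, a ranking on $\mathcal{X}$. Interaction: given a tournament $\mathrel{W}$, set $R_0=\varnothing$; in each period $t\geq1$ with $R_{t-1}$ not total, the chair offers a pair $\{x,y\}$ of distinct alternatives unranked by $R_{t-1}$, the winner is $x$ if $x\mathrel{W}y$ and $y$ otherwise, and $R_t$ is the transitive closure of $R_{t-1}\cup\{(\text{winner},\text{loser})\}$; stop when $R_t$ is total. A history is a sequence of (winner, loser) pairs that can arise this way; a strategy assigns to each non-terminal history a pair unranked at it. The outcome of $\sigma$ under $\mathrel{W}$ is the final ranking. A ranking is $\mathrel{W}$-feasible if it is the outcome under $\mathrel{W}$ of some strategy. $R$ is more aligned with $\succ$ than $R'$ if for all $x\succ y$, $xR'y$ implies $xRy$. A ranking is $\mathrel{W}$-unimprovable if no other $\mathrel{W}$-feasible ranking is more aligned with $\succ$. A strategy is regret-free if for every tournament $\mathrel{W}$ its outcome under $\mathrel{W}$ is $\mathrel{W}$-unimprovable. A ranking $R$ is $\mathrel{W}$-efficient if $x\succ y$ and $x\mathrel{W}y$ imply $xRy$. *)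

(* Defs.v *)
From mathcomp Require Import all_boot.
Set Implicit Arguments. Unset Strict Implicit. Unset Printing Implicit Defensive.

Section Chair.
Variable X : finType.

Definition tclose (R : rel X) : rel X :=
  fun x y => [exists z, R x z && connect R z y].

Definition irreflexiveb (R : rel X) : bool := [forall x, ~~ R x x].
Definition transitiveb (R : rel X) : bool :=
  [forall x, forall y, forall z, R x y ==> R y z ==> R x z].
Definition totalb (R : rel X) : bool :=
  [forall x, forall y, (x != y) ==> R x y || R y x].
Definition asymmetricb (R : rel X) : bool :=
  [forall x, forall y, R x y ==> ~~ R y x].

Definition proto_ranking (R : rel X) : bool := irreflexiveb R && transitiveb R.
Definition ranking (R : rel X) : bool := proto_ranking R && totalb R.
Definition tournament (W : rel X) : bool := totalb W && asymmetricb W.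

Definition unranked (R : rel X) (x y : X) : bool :=
  [&& x != y, ~~ R x y & ~~ R y x].

(* relation after a sequence of (winner, loser) pairs:
   R_0 = empty, R_t = transitive closure of R_{t-1} U {(winner, loser)} *)
Definition relh (h : seq (X * X)) : rel X :=
  foldl (fun R p => tclose (fun x y => R x y || ((x, y) == p)))
        (fun _ _ => false) h.

Definition is_history (h : seq (X * X)) : Prop :=
  forall h1 p h2, h = h1 ++ p :: h2 ->
    ~~ totalb (relh h1) && unranked (relh h1) p.1 p.2.

(* a strategy maps histories to an (unordered, represented as ordered) pair *)
Definition strategy := seq (X * X) -> X * X.

Definition valid_strategy (s : strategy) : Prop :=
  forall h, is_history h -> ~~ totalb (relh h) ->
    unranked (relh h) (s h).1 (s h).2.

Definition play (W : rel X) (p : X * X) : X * X :=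
  if W p.1 p.2 then p else (p.2, p.1).

Definition generated (s : strategy) (W : rel X) (h : seq (X * X)) : Prop :=
  forall h1 p h2, h = h1 ++ p :: h2 ->
    ~~ totalb (relh h1) /\ p = play W (s h1).

Definition outcome (s : strategy) (W : rel X) (R : rel X) : Prop :=
  exists h, generated s W h /\ totalb (relh h) /\ relh h =2 R.

Definition feasible (W R : rel X) : Prop :=
  exists s, valid_strategy s /\ outcome s W R.

Variable pref : rel X.

Definition more_aligned (R R' : rel X) : Prop :=
  forall x y, pref x y -> R' x y -> R x y.

Definition unimprovable (W R : rel X) : Prop :=
  forall R', feasible W R' -> more_aligned R' R -> R' =2 R.

Definition regret_free (s : strategy) : Prop :=
  forall W, tournament W -> forall R, outcome s W R -> unimprovable W R.

Definition efficient (W R : rel X) : Prop :=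
  forall x y, pref x y -> W x y -> R x y.

End Chair.

(* Main.v *)
Require Import Defs.
From mathcomp Require Import all_boot.
Set Implicit Arguments. Unset Strict Implicit. Unset Printing Implicit Defensive.

Section Gen.
Variable X : finType.
Implicit Types (Q S : rel X) (h : seq (X * X)).

Lemma rankingP (R : rel X) : ranking R ->
  [/\ forall x, ~~ R x x, forall x y z, R x y -> R y z -> R x z
    & forall x y, x != y -> R x y || R y x].
Proof.
case/andP => /andP [/forallP Hi /forallP Ht] /forallP Htot; split.
- by move=> x; exact: Hi.
- move=> x y z Hxy Hyz.
  by move: (Ht x) => /forallP /(_ y) /forallP /(_ z) /implyP /(_ Hxy) /implyP /(_ Hyz).
- by move=> x y Hxy; move: (Htot x) => /forallP /(_ y) /implyP /(_ Hxy).
Qed.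

Lemma tournamentP (W : rel X) : tournament W ->
  (forall x y, x != y -> W x y || W y x) /\ (forall x y, W x y -> ~~ W y x).
Proof.
case/andP => /forallP Htot /forallP Has; split.
- by move=> x y Hxy; move: (Htot x) => /forallP /(_ y) /implyP /(_ Hxy).
- by move=> x y Hxy; move: (Has x) => /forallP /(_ y) /implyP /(_ Hxy).
Qed.

Lemma totalP Q : totalb Q -> forall x y, x != y -> Q x y || Q y x.
Proof.
by move/forallP => H x y Hxy; move: (H x) => /forallP /(_ y) /implyP /(_ Hxy).
Qed.

Lemma ntotalP Q : ~~ totalb Q -> exists x y, unranked Q x y.
Proof.
move/forallPn => [x /forallPn [y]]; rewrite negb_imply negb_or => /andP [H1 H2].
by exists x, y; rewrite /unranked H1.
Qed.

Lemma card_lt (A B : pred X) c : (forall z, A z -> B z) -> ~~ A c -> B c -> #|A| < #|B|.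
Proof.
move=> AB nAc Bc; apply: proper_card; apply/properP; split.
  by apply/subsetP => z; apply: AB.
by exists c.
Qed.

Lemma min_pair S (P : X -> X -> bool) :
  (forall x, ~~ S x x) -> (forall x y z, S x y -> S y z -> S x z) ->
  forall x y, S x y -> P x y ->
  exists a b, [/\ S a b, P a b & forall c, S a c -> S c b -> ~~ P a c && ~~ P c b].
Proof.
move=> Hirr Htr.
suff H : forall n x y, #|[pred z | S x z && S z y]| <= n -> S x y -> P x y ->
  exists a b, [/\ S a b, P a b & forall c, S a c -> S c b -> ~~ P a c && ~~ P c b].
  by move=> x y; apply: H (leqnn _).
elim=> [|n IH] x y Hc Sxy Pxy.
  case: (boolP [exists c, S x c && S c y]).
    move/existsP => [c Hc']; have : 0 < #|[pred z | S x z && S z y]|.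
      by apply/card_gt0P; exists c.
    by rewrite ltnNge Hc.
  move/existsPn => H; exists x, y; split => // c Sxc Scy.
  by move: (H c); rewrite Sxc Scy.
case: (boolP [exists c, [&& S x c, S c y & P x c || P c y]]).
  move/existsP => [c /and3P [Sxc Scy /orP [Pxc|Pcy]]].
    apply: (IH x c) => //.
    rewrite -ltnS; apply: leq_trans Hc; apply: (@card_lt _ _ c).
    - by move=> z /andP [Sxz Szc]; rewrite /= Sxz (Htr _ _ _ Szc Scy).
    - by rewrite /= (negbTE (Hirr c)) andbF.
    - by rewrite /= Sxc Scy.
  apply: (IH c y) => //.
  rewrite -ltnS; apply: leq_trans Hc; apply: (@card_lt _ _ c).
  - by move=> z /andP [Scz Szy]; rewrite /= Szy (Htr _ _ _ Sxc Scz).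
  - by rewrite /= (negbTE (Hirr c)).
  - by rewrite /= Sxc Scy.
move/existsPn => H; exists x, y; split => // c Sxc Scy.
by move: (H c); rewrite Sxc Scy /= negb_or.
Qed.

Lemma tclose_trans (R : rel X) x y z : tclose R x y -> tclose R y z -> tclose R x z.
Proof.
move=> /existsP [w /andP [Rxw Cwy]] /existsP [v /andP [Ryv Cvz]].
apply/existsP; exists w; rewrite Rxw /=.
apply: connect_trans Cwy _; apply: connect_trans (connect1 Ryv) Cvz.
Qed.

Lemma tclose_sub (R F : rel X) : (forall x y z, F x y -> F y z -> F x z) ->
  (forall x y, R x y -> F x y) -> forall x y, tclose R x y -> F x y.
Proof.
move=> Ftr RF x y /existsP [z /andP [Rxz /connectP [p Hp ->]]].
have : F x z by apply: RF.
elim: p z {Rxz} Hp => [|w p IH] z //= /andP [Rzw Hp] Fxz.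
by apply: (IH w Hp); apply: Ftr Fxz (RF _ _ Rzw).
Qed.

Definition step Q (p : X * X) : rel X :=
  fun x y => Q x y || ((x == p.1) || Q x p.1) && ((y == p.2) || Q p.2 y).

Lemma step_trans Q p : (forall x y z, Q x y -> Q y z -> Q x z) ->
  forall x y z, step Q p x y -> step Q p y z -> step Q p x z.
Proof.
move=> Htr x y z; rewrite /step.
case/orP => [Qxy|/andP [Hx Hy]]; case/orP => [Qyz|/andP [Hy' Hz]].
- by rewrite (Htr _ _ _ Qxy Qyz).
- apply/orP; right; rewrite Hz andbT; case/orP: Hy' => [/eqP Ey|Qy].
    by subst y; rewrite Qxy orbT.
  by rewrite (Htr _ _ _ Qxy Qy) orbT.
- apply/orP; right; rewrite Hx /=; case/orP: Hy => [/eqP Ey|Qy].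
    by subst y; rewrite Qyz orbT.
  by rewrite (Htr _ _ _ Qy Qyz) orbT.
- by rewrite Hx Hz orbT.
Qed.

Lemma tclose_step Q p : (forall x y z, Q x y -> Q y z -> Q x z) ->
  forall x y, tclose (fun x y => Q x y || ((x, y) == p)) x y = step Q p x y.
Proof.
case: p => a b Htr x y; apply/idP/idP.
  apply: tclose_sub; first exact: step_trans.
  move=> u v /orP [Quv|/eqP [-> ->]]; first by rewrite /step Quv.
  by rewrite /step /= !eqxx orbT.
rewrite /step /=; case/orP => [Qxy|/andP [Hx Hy]].
  by apply/existsP; exists y; rewrite Qxy connect0.
have Cy : connect (fun x y => Q x y || ((x, y) == (a, b))) b y.
  case/orP: Hy => [/eqP ->|Qy]; first exact: connect0.
  by apply: connect1; rewrite Qy.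
case/orP: Hx => [/eqP Ex|Qx].
  by apply/existsP; exists b; rewrite Cy andbT Ex eqxx orbT.
apply/existsP; exists a; rewrite Qx /=.
by apply: connect_trans Cy; apply: connect1; rewrite eqxx orbT.
Qed.

Lemma relh_trans h x y z : relh h x y -> relh h y z -> relh h x z.
Proof.
case/lastP: h => [|h p] //; rewrite /relh foldl_rcons; exact: tclose_trans.
Qed.

Lemma relh_step h p x y : relh (rcons h p) x y = step (relh h) p x y.
Proof.
rewrite -tclose_step; last exact: relh_trans.
by rewrite /relh foldl_rcons.
Qed.

Lemma split_rcons (P : seq (X * X) -> X * X -> Prop) h q :
  (forall h1 p h2, rcons h q = h1 ++ p :: h2 -> P h1 p) <->
  ((forall h1 p h2, h = h1 ++ p :: h2 -> P h1 p) /\ P h q).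
Proof.
split.
  move=> H; split.
    move=> h1 p h2 Eh; apply: (H h1 p (rcons h2 q)).
    by rewrite Eh rcons_cat rcons_cons.
  by apply: (H h q [::]); rewrite cats1.
move=> [H1 H2] h1 p h2; case/lastP: h2 => [|h2 r].
  by rewrite cats1 => /rcons_inj [<- <-].
rewrite -rcons_cons -rcons_cat => /rcons_inj [Eh _]; exact: H1 Eh.
Qed.

Lemma split_nil (P : seq (X * X) -> X * X -> Prop) :
  forall h1 p h2, [::] = h1 ++ p :: h2 -> P h1 p.
Proof. by move=> [|? ?]. Qed.

End Gen.


Section Gen2.
Variable X : finType.
Implicit Types (Q S : rel X) (h : seq (X * X)).

Lemma generated_rcons (s : strategy X) W h p :
  generated s W (rcons h p) <->
  generated s W h /\ ~~ totalb (relh h) /\ p = play W (s h).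
Proof. exact: (@split_rcons X (fun h1 p => ~~ totalb (relh h1) /\ p = play W (s h1))). Qed.

Lemma history_rcons h p :
  is_history (rcons h p) <->
  is_history h /\ (~~ totalb (relh h) && unranked (relh h) p.1 p.2).
Proof. exact: (@split_rcons X (fun h1 p => is_true (~~ totalb (relh h1) && unranked (relh h1) p.1 p.2))). Qed.

Lemma generated_nil (s : strategy X) W : generated s W [::].
Proof. by move=> [|? ?]. Qed.

Lemma history_nil : is_history (X:=X) [::].
Proof. by move=> [|? ?]. Qed.

Lemma play_cases W (q : X * X) : play W q = q \/ play W q = (q.2, q.1).
Proof. by rewrite /play; case: ifP; [left|right]. Qed.

Lemma play_W W (q : X * X) : tournament W -> q.1 != q.2 -> W (play W q).1 (play W q).2.
Proof.
move=> /tournamentP [Htot _] Hne; rewrite /play; case: ifP => //= /negbT H.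
by move: (Htot _ _ Hne); rewrite (negbTE H).
Qed.

Lemma unranked_sym Q x y : unranked Q x y = unranked Q y x.
Proof. by rewrite /unranked eq_sym; congr (_ && _); rewrite andbC. Qed.

Lemma unranked_play Q W (q : X * X) : unranked Q q.1 q.2 -> unranked Q (play W q).1 (play W q).2.
Proof. by case: (play_cases W q) => ->; rewrite // unranked_sym. Qed.

Lemma gen_inv (s : strategy X) W : valid_strategy s -> tournament W ->
  forall h, generated s W h ->
  [/\ is_history h, forall x, ~~ relh h x x &
      forall x y, relh h x y -> W x y \/ exists c, relh h x c /\ relh h c y].
Proof.
move=> Hv HW; elim/last_ind => [|h p IH].
  by move=> _; split => //; exact: history_nil.
case/generated_rcons => Hg [Hnt Hp]; have [Hh Hirr Hwb] := IH Hg.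
have Hun : unranked (relh h) p.1 p.2 by rewrite Hp; apply: unranked_play; exact: Hv.
have HWp : W p.1 p.2.
  by rewrite Hp; apply: play_W => //; move: (Hv h Hh Hnt); case/andP.
move: Hun => /and3P [Hne H12 H21].
split.
- by apply/history_rcons; split => //; rewrite Hnt /unranked Hne H12 H21.
- move=> x; rewrite relh_step /step (negbTE (Hirr x)) /=.
  apply/negP => /andP [/orP [/eqP Ex|Qx] /orP [/eqP Ey|Qy]].
  + by move: Hne; rewrite -Ex -Ey eqxx.
  + by move: H21; rewrite -Ex Qy.
  + by move: H21; rewrite -Ey Qx.
  + by move: H21; rewrite (relh_trans Qy Qx).
- move=> x y; rewrite relh_step /step; case/orP => [Qxy|/andP [Hx Hy]].
    case: (Hwb _ _ Qxy) => [Wxy|[c [Qxc Qcy]]]; first by left.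
    by right; exists c; rewrite !relh_step /step Qxc Qcy.
  case/orP: Hx => [/eqP Ex|Qx].
    case/orP: Hy => [/eqP Ey|Qy]; first by left; rewrite Ex Ey.
    right; exists p.2; rewrite !relh_step /step Qy Ex !eqxx /=.
    by rewrite orbT.
  right; exists p.1; rewrite !relh_step /step Qx /= !eqxx /= Hy.
  by rewrite orbT.
Qed.

Variable pref : rel X.

Lemma unimp W' R' : ranking pref -> tournament W' ->
  (forall x, ~~ R' x x) -> (forall x y z, R' x y -> R' y z -> R' x z) ->
  (forall x y, x != y -> R' x y || R' y x) ->
  efficient pref W' R' -> unimprovable pref W' R'.
Proof.
move=> /rankingP [Pirr Ptr Ptot] HW Rirr Rtr Rtot Heff.
move=> R'' [s'' [Hv [h [Hg [Ht Heq]]]]] Hal.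
have [_ Hirr Hwb] := gen_inv Hv HW Hg.
have Htot := totalP Ht.
have Hno : forall x y, relh h x y -> ~~ R' y x.
  move=> x y Hxy; apply/negP => Hyx.
  have [a [b [Sab Pab Hmin]]] :=
    @min_pair X (relh h) (fun x y => R' y x) Hirr (@relh_trans X h) x y Hxy Hyx.
  case: (Hwb a b Sab) => [Wab|[c [Sac Scb]]].
    have Hne : a != b by apply/eqP => Eab; move: (Hirr a); rewrite {2}Eab Sab.
    case/orP: (Ptot _ _ Hne) => Hp.
      by move: (Rirr a); rewrite (Rtr _ _ _ (Heff _ _ Hp Wab) Pab).
    have := Hal _ _ Hp Pab; rewrite -Heq => Hba.
    by move: (Hirr a); rewrite (relh_trans Sab Hba).
  move: (Hmin c Sac Scb) => /andP [nca nbc].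
  have Hne : c != a by apply/eqP => Eca; move: (Hirr a); rewrite -{2}Eca Sac.
  case/orP: (Rtot _ _ Hne) => H; first by rewrite H in nca.
  by rewrite (Rtr _ _ _ Pab H) in nbc.
move=> x y; rewrite -Heq; apply/idP/idP => H.
  have Hne : x != y by apply/eqP => Exy; move: (Hirr x); rewrite {2}Exy H.
  case/orP: (Rtot _ _ Hne) => // H'; by move: (Hno _ _ H); rewrite H'.
have Hne : x != y by apply/eqP => Exy; move: (Rirr x); rewrite {2}Exy H.
case/orP: (Htot _ _ Hne) => // H'; by move: (Hno _ _ H'); rewrite H.
Qed.

End Gen2.


Section Bubble.
Variable X : finType.
Variable pref : rel X.
Hypothesis Pirr : forall x, ~~ pref x x.
Hypothesis Ptr : forall x y z, pref x y -> pref y z -> pref x z.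
Hypothesis Ptot : forall x y, x != y -> pref x y || pref y x.
Implicit Types (Q : rel X).

Definition LQ Q : rel X := fun x y => Q x y || (~~ Q y x && pref x y).

Definition adj Q (p : X * X) : bool :=
  [&& unranked Q p.1 p.2, LQ Q p.1 p.2 & [forall c, ~~ (LQ Q p.1 c && LQ Q c p.2)]].

Definition Bub Q : Prop :=
  [/\ forall x, ~~ Q x x, forall x y z, Q x y -> Q y z -> Q x z
    & forall x y z, LQ Q x y -> LQ Q y z -> LQ Q x z].

Section B.
Variable Q : rel X.
Hypothesis HB : Bub Q.

Lemma Qirr x : ~~ Q x x. Proof. by case: HB. Qed.
Lemma Qtr x y z : Q x y -> Q y z -> Q x z. Proof. by case: HB => _ H _; apply: H. Qed.
Lemma Ltr x y z : LQ Q x y -> LQ Q y z -> LQ Q x z. Proof. by case: HB => _ _ H; apply: H. Qed.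
Lemma Lirr x : ~~ LQ Q x x.
Proof. by rewrite /LQ negb_or (Qirr x) /= Pirr. Qed.
Lemma Lasym x y : LQ Q x y -> ~~ LQ Q y x.
Proof. by move=> Hxy; apply/negP => Hyx; move: (Lirr x); rewrite (Ltr Hxy Hyx). Qed.
Lemma Ltot x y : x != y -> LQ Q x y || LQ Q y x.
Proof.
move=> Hne; rewrite /LQ; case Qxy: (Q x y) => //=; case Qyx: (Q y x) => //=.
exact: Ptot.
Qed.
Lemma QL x y : Q x y -> LQ Q x y. Proof. by rewrite /LQ => ->. Qed.
Lemma LQun x y : LQ Q x y -> ~~ Q x y -> pref x y && ~~ Q y x.
Proof. by rewrite /LQ andbC => /orP [->|]. Qed.
Lemma Lne x y : LQ Q x y -> x != y.
Proof. by move=> H; apply/eqP => E; move: (Lirr x); rewrite {2}E H. Qed.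

Variables a b : X.
Hypothesis Hadj : adj Q (a, b).

Lemma adj_ne : a != b. Proof. by case/and3P: Hadj => /and3P []. Qed.
Lemma adj_nab : ~~ Q a b. Proof. by case/and3P: Hadj => /and3P []. Qed.
Lemma adj_nba : ~~ Q b a. Proof. by case/and3P: Hadj => /and3P []. Qed.
Lemma adj_L : LQ Q a b. Proof. by case/and3P: Hadj. Qed.
Lemma adj_none c : ~~ (LQ Q a c && LQ Q c b).
Proof. by case/and3P: Hadj => _ _ /forallP. Qed.

Lemma A1 c : c != a -> c != b -> (LQ Q a c = LQ Q b c) /\ (LQ Q c a = LQ Q c b).
Proof.
move=> ca cb; split; apply/idP/idP => H.
- case/orP: (Ltot (cb : c != b)) => H'; last by [].
  by move: (adj_none c); rewrite H H'.
- exact: Ltr adj_L H.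
- exact: Ltr H adj_L.
- case/orP: (Ltot (ca : c != a)) => H'; first by [].
  by move: (adj_none c); rewrite H H'.
Qed.

Lemma N1 x y : step Q (a, b) x y -> LQ Q x y.
Proof.
rewrite /step /=; case/orP => [/QL //|/andP [Hx Hy]].
have Hx' : (x == a) || LQ Q x a by case/orP: Hx => [->|/QL ->]; rewrite ?orbT.
have Hy' : (y == b) || LQ Q b y by case/orP: Hy => [->|/QL ->]; rewrite ?orbT.
have Hxb : LQ Q x b.
  by case/orP: Hx' => [/eqP ->|Hxa]; [exact: adj_L | exact: Ltr Hxa adj_L].
by case/orP: Hy' => [/eqP ->|Hby] //; exact: Ltr Hxb Hby.
Qed.

Lemma E1 x y : LQ (step Q (a, b)) x y = LQ Q x y.
Proof.
apply/idP/idP.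
  rewrite {1}/LQ; case/orP => [/N1 //|/andP [Hn Hp]].
  rewrite /LQ; apply/orP; right; rewrite Hp andbT.
  by apply: contra Hn; rewrite /step => ->.
move=> H; rewrite /LQ; case Sxy: (step Q (a, b) x y) => //=.
case Syx: (step Q (a, b) y x).
  by move: (Lasym H); rewrite (N1 Syx).
move: H; rewrite /LQ; case/orP => [Qxy|/andP [_ ->] //].
by move: Sxy; rewrite /step Qxy.
Qed.

Lemma bub_ab : Bub (step Q (a, b)) /\
  (forall x y, step Q (a, b) x y -> ~~ Q x y -> pref x y).
Proof.
split; last by move=> x y /N1 H nQ; case/andP: (LQun H nQ).
split.
- by move=> x; apply/negP => /N1; apply/negP; exact: Lirr.
- apply: step_trans; exact: Qtr.
- by move=> x y z; rewrite !E1; exact: Ltr.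
Qed.

Definition sig x := if x == a then b else if x == b then a else x.
Lemma sig_a : sig a = b. Proof. by rewrite /sig eqxx. Qed.
Lemma sig_b : sig b = a. Proof. by rewrite /sig eq_sym (negbTE adj_ne) eqxx. Qed.
Lemma sig_c c : c != a -> c != b -> sig c = c.
Proof. by move=> ca cb; rewrite /sig (negbTE ca) (negbTE cb). Qed.

Lemma A2 x y : ~~ ((x == a) && (y == b)) -> ~~ ((x == b) && (y == a)) ->
  LQ Q (sig x) (sig y) = LQ Q x y.
Proof.
have [->|xa] := eqVneq x a.
  rewrite sig_a; have [->|ya] := eqVneq y a.
    by rewrite sig_a (negbTE (Lirr b)) (negbTE (Lirr a)).
  have [->|yb] := eqVneq y b; first by [].
  by rewrite (sig_c ya yb); case: (A1 ya yb) => ->.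
have [->|xb] := eqVneq x b.
  rewrite sig_b; have [->|yb] := eqVneq y b.
    by rewrite sig_b (negbTE (Lirr b)) (negbTE (Lirr a)).
  have [->|ya] := eqVneq y a; first by rewrite ?eqxx.
  by rewrite (sig_c ya yb); case: (A1 ya yb) => ->.
rewrite (sig_c xa xb).
have [->|ya] := eqVneq y a; first by rewrite sig_a; case: (A1 xa xb) => _ ->.
have [->|yb] := eqVneq y b; first by rewrite sig_b; case: (A1 xa xb) => _ ->.
by rewrite (sig_c ya yb).
Qed.

Lemma N2 x y : step Q (b, a) x y -> LQ Q (sig x) (sig y).
Proof.
rewrite /step /=; case/orP => [Qxy|/andP [Hx Hy]].
  rewrite A2; first exact: QL.
    by apply/negP => /andP [/eqP Ex /eqP Ey]; move: adj_nab; rewrite -Ex -Ey Qxy.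
  by apply/negP => /andP [/eqP Ex /eqP Ey]; move: adj_nba; rewrite -Ex -Ey Qxy.
case/orP: Hx => [/eqP ->|Qxb]; case/orP: Hy => [/eqP ->|Qay].
- by rewrite sig_a sig_b adj_L.
- have ya : y != a by apply/eqP => E; move: (Qirr a); rewrite -{2}E Qay.
  have yb : y != b by apply/eqP => E; move: adj_nab; rewrite -E Qay.
  by rewrite sig_b (sig_c ya yb) QL.
- have xb : x != b by apply/eqP => E; move: (Qirr b); rewrite -{1}E Qxb.
  have xa : x != a by apply/eqP => E; move: adj_nab; rewrite -E Qxb.
  by rewrite sig_a (sig_c xa xb) QL.
- have ya : y != a by apply/eqP => E; move: (Qirr a); rewrite -{2}E Qay.
  have yb : y != b by apply/eqP => E; move: adj_nab; rewrite -E Qay.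
  have xb : x != b by apply/eqP => E; move: (Qirr b); rewrite -{1}E Qxb.
  have xa : x != a by apply/eqP => E; move: adj_nab; rewrite -E Qxb.
  rewrite (sig_c ya yb) (sig_c xa xb).
  have Hxa : LQ Q x a by case: (A1 xa xb) => _ ->; exact: QL.
  exact: Ltr Hxa (QL Qay).
Qed.

Lemma step_ab_false : step Q (b, a) a b = false.
Proof.
by rewrite /step /= (negbTE adj_nab) (negbTE adj_ne).
Qed.

Lemma E2 x y : LQ (step Q (b, a)) x y = LQ Q (sig x) (sig y).
Proof.
case: (boolP ((x == b) && (y == a))) => [/andP [/eqP -> /eqP ->]|H2].
  rewrite sig_a sig_b adj_L /LQ.
  by rewrite /step /= !eqxx /= orbT.
case: (boolP ((x == a) && (y == b))) => [/andP [/eqP -> /eqP ->]|H1].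
  rewrite sig_a sig_b (negbTE (Lasym adj_L)) /LQ step_ab_false /=.
  by rewrite /step /= !eqxx /= orbT.
rewrite A2 //.
have H1' : ~~ ((y == a) && (x == b)) by rewrite andbC.
have H2' : ~~ ((y == b) && (x == a)) by rewrite andbC.
apply/idP/idP.
  rewrite {1}/LQ; case/orP => [/N2|/andP [Hn Hp]]; first by rewrite A2.
  rewrite /LQ Hp andbT; apply/orP; right; apply: contra Hn; rewrite /step => ->; by [].
move=> H; rewrite /LQ; case Sxy: (step Q (b, a) x y) => //=.
case Syx: (step Q (b, a) y x).
  by move: (N2 Syx); rewrite A2 // (negbTE (Lasym H)).
move: H; rewrite /LQ; case/orP => [Qxy|/andP [_ ->] //].
by move: Sxy; rewrite /step Qxy.
Qed.

Lemma bub_ba : Bub (step Q (b, a)) /\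
  (forall x y, step Q (b, a) x y -> ~~ Q x y -> (x, y) != (b, a) -> pref x y).
Proof.
split.
  split.
  - by move=> x; apply/negP => /N2; apply/negP; exact: Lirr.
  - apply: step_trans; exact: Qtr.
  - by move=> x y z; rewrite !E2; exact: Ltr.
move=> x y Sxy nQ Hne.
have H1 : ~~ ((x == a) && (y == b)).
  by apply/negP => /andP [/eqP Ex /eqP Ey]; move: Sxy; rewrite Ex Ey step_ab_false.
have H2 : ~~ ((x == b) && (y == a)).
  by apply: contra Hne => /andP [/eqP -> /eqP ->].
move: (N2 Sxy); rewrite A2 // => H.
by case/andP: (LQun H nQ).
Qed.

End B.

Lemma bub_step Q (p : X * X) : Bub Q -> adj Q p ->
  forall q, (q = p \/ q = (p.2, p.1)) ->
  Bub (step Q q) /\ (forall x y, step Q q x y -> ~~ Q x y -> (x, y) != q -> pref x y).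
Proof.
case: p => a b HB Ha q [->|->] /=.
  by have [H1 H2] := bub_ab HB Ha; split => // x y H3 H4 _; exact: H2.
exact: bub_ba.
Qed.

End Bubble.


Section Main.
Variable X : finType.
Variable pref : rel X.
Hypothesis Pirr : forall x, ~~ pref x x.
Hypothesis Ptr : forall x y z, pref x y -> pref y z -> pref x z.
Hypothesis Ptot : forall x y, x != y -> pref x y || pref y x.
Variables (W R : rel X) (s0 : strategy X).
Hypothesis HW : tournament W.
Hypothesis Rirr : forall x, ~~ R x x.
Hypothesis Rtr : forall x y z, R x y -> R y z -> R x z.
Hypothesis Rtot : forall x y, x != y -> R x y || R y x.
Hypothesis Heff : efficient pref W R.
Hypothesis Hcons : forall a b, R a b -> (forall c, ~~ (R a c && R c b)) -> W a b.

Implicit Types (Q : rel X) (h : seq (X * X)).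

Definition goodR Q (p : X * X) := adj pref Q p && R (play W p).1 (play W p).2.

Definition strat : strategy X := fun h =>
  let Q := relh h in
  if [pick p | goodR Q p] is Some p then p else
  if [pick p | adj pref Q p] is Some p then p else
  if [pick p | unranked Q p.1 p.2] is Some p then p else s0 h.

Lemma Bub_ext Q1 Q2 : (forall x y, Q1 x y = Q2 x y) -> Bub pref Q2 -> Bub pref Q1.
Proof.
move=> E [H1 H2 H3].
have EL : forall x y, LQ pref Q1 x y = LQ pref Q2 x y by move=> x y; rewrite /LQ !E.
split.
- by move=> x; rewrite E.
- by move=> x y z; rewrite !E; apply: H2.
- by move=> x y z; rewrite !EL; apply: H3.
Qed.

Lemma Bub_nil : Bub pref (relh (X:=X) [::]).
Proof. by split => // x y z; rewrite /LQ /=; apply: Ptr. Qed.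

Lemma strat_unranked h : ~~ totalb (relh h) -> unranked (relh h) (strat h).1 (strat h).2.
Proof.
move=> Hnt; rewrite /strat.
case: pickP => [p /andP [/and3P [Hu _ _] _] //|_].
case: pickP => [p /and3P [Hu _ _] //|_].
case: pickP => [p Hu //|H0].
have [x [y Hxy]] := ntotalP Hnt.
by move: (H0 (x, y)); rewrite /= Hxy.
Qed.

Lemma notun_Q Q x y : Bub pref Q -> LQ pref Q x y -> ~~ unranked Q x y -> Q x y.
Proof.
move=> HB Lxy; rewrite /unranked (Lne Pirr HB Lxy) /= negb_and !negbK.
case/orP => // Qyx; move: (Lasym Pirr HB Lxy); by rewrite (QL pref Qyx).
Qed.

Lemma exists_adj Q : Bub pref Q -> ~~ totalb Q -> exists p, adj pref Q p.
Proof.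
move=> HB Hnt; have [x [y Hxy]] := ntotalP Hnt.
have [x0 [y0 [L0 U0]]] : exists x0 y0, LQ pref Q x0 y0 /\ unranked Q x0 y0.
  have Hne : x != y by case/and3P: Hxy.
  case/orP: (Ltot Ptot Q Hne) => H; first by exists x, y.
  by exists y, x; rewrite unranked_sym.
have [a [b [Lab Uab Hmin]]] :=
  @min_pair X (LQ pref Q) (unranked Q) (Lirr Pirr HB) (Ltr HB) x0 y0 L0 U0.
exists (a, b); rewrite /adj /= Uab Lab /=; apply/forallP => c; apply/negP => /andP [Lac Lcb].
case/andP: (Hmin c Lac Lcb) => Hac Hcb.
have Qac := notun_Q HB Lac Hac; have Qcb := notun_Q HB Lcb Hcb.
by move: Uab; rewrite /unranked (Qtr HB Qac Qcb) andbF.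
Qed.

Lemma strat_adj h : Bub pref (relh h) -> ~~ totalb (relh h) -> adj pref (relh h) (strat h).
Proof.
move=> HB Hnt; rewrite /strat.
case: pickP => [p /andP [] //|_].
case: pickP => [p //|H0].
have [p Hp] := exists_adj HB Hnt.
by move: (H0 p); rewrite Hp.
Qed.

Lemma exists_goodR Q : Bub pref Q -> (forall x y, Q x y -> R x y) -> ~~ totalb Q ->
  exists p, goodR Q p.
Proof.
move=> HB Qsub Hnt.
case: (boolP [exists x, exists y, LQ pref Q x y && R y x]).
  move/existsP => [x /existsP [y /andP [Lxy Ryx]]].
  have [a [b [Lab Rba Hmin]]] :=
    @min_pair X (LQ pref Q) (fun x y => R y x) (Lirr Pirr HB) (Ltr HB) x y Lxy Ryx.
  have nQab : ~~ Q a b.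
    by apply/negP => /Qsub Rab; move: (Rirr a); rewrite (Rtr Rab Rba).
  have nQba : ~~ Q b a by apply/negP => /(QL pref) Lba; move: (Lasym Pirr HB Lab); rewrite Lba.
  have Hab : a != b := Lne Pirr HB Lab.
  exists (a, b); rewrite /goodR /adj /= /unranked Hab nQab nQba Lab /=.
  apply/andP; split.
    apply/forallP => c; apply/negP => /andP [Lac Lcb].
    case/andP: (Hmin c Lac Lcb) => nRca nRbc.
    case/orP: (Rtot (Lne Pirr HB Lac)) => H; first by rewrite (Rtr Rba H) in nRbc.
    by rewrite H in nRca.
  have Pab : pref a b by case/andP: (LQun Lab nQab).
  have nWab : ~~ W a b by apply/negP => Wab; move: (Rirr a); rewrite (Rtr (Heff Pab Wab) Rba).
  by rewrite /play /= (negbTE nWab).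
move/existsPn => H.
have LR : forall x y, LQ pref Q x y -> R x y.
  move=> x y Lxy; case/orP: (Rtot (Lne Pirr HB Lxy)) => // Ryx.
  by move: (H x) => /existsPn /(_ y); rewrite Lxy Ryx.
have [x [y Hxy]] := ntotalP Hnt.
have [x0 [y0 [R0 N0]]] : exists x0 y0, R x0 y0 /\ ~~ Q x0 y0.
  case/and3P: Hxy => Hne nxy nyx.
  by case/orP: (Rtot Hne) => H'; [exists x, y | exists y, x].
have [a [b [Rab nQab Hmin]]] :=
  @min_pair X R (fun x y => ~~ Q x y) Rirr Rtr x0 y0 R0 N0.
have Hnb : forall c, ~~ (R a c && R c b).
  move=> c; apply/negP => /andP [Rac Rcb].
  case/andP: (Hmin c Rac Rcb); rewrite !negbK => Qac Qcb.
  by rewrite (Qtr HB Qac Qcb) in nQab.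
have Wab := Hcons Rab Hnb.
have Hab : a != b by apply/eqP => E; move: (Rirr a); rewrite {2}E Rab.
have nQba : ~~ Q b a by apply/negP => /Qsub Rba; move: (Rirr a); rewrite (Rtr Rab Rba).
have Lab : LQ pref Q a b.
  case/orP: (Ltot Ptot Q Hab) => // /LR Rba; by move: (Rirr a); rewrite (Rtr Rab Rba).
exists (a, b); rewrite /goodR /adj /= /unranked Hab nQab nQba Lab /=.
apply/andP; split; last by rewrite /play /= Wab.
apply/forallP => c; apply/negP => /andP [/LR Rac /LR Rcb].
by move: (Hnb c); rewrite Rac Rcb.
Qed.

Lemma strat_goodR h : Bub pref (relh h) -> (forall x y, relh h x y -> R x y) ->
  ~~ totalb (relh h) -> goodR (relh h) (strat h).
Proof.
move=> HB Hs Hnt; rewrite /strat.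
case: pickP => [p //|H0].
have [p Hp] := exists_goodR HB Hs Hnt.
by move: (H0 p); rewrite Hp.
Qed.

Lemma inv_any W' : tournament W' -> forall h, generated strat W' h ->
  Bub pref (relh h) /\ (forall x y, relh h y x -> pref x y -> W' y x).
Proof.
move=> HW'; elim/last_ind => [|h p IH].
  by move=> _; split; [exact: Bub_nil | by []].
case/generated_rcons => Hg [Hnt Hp]; have [HB Hinv] := IH Hg.
have Hadj := strat_adj HB Hnt.
have Hq : p = strat h \/ p = ((strat h).2, (strat h).1) by rewrite Hp; exact: play_cases.
have [HB' Hnew] := bub_step Pirr Ptot HB Hadj Hq.
split; first by apply: Bub_ext HB' => x y; exact: relh_step.
move=> x y; rewrite relh_step => Syx Pxy.
case: (boolP (relh h y x)) => [Qyx|nQyx]; first exact: Hinv.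
case: (boolP ((y, x) == p)) => [/eqP Eyx|Hne].
  have := @play_W X W' (strat h) HW'; rewrite -Hp -Eyx /=; apply.
  by case/and3P: Hadj => /and3P [].
have := Hnew y x Syx nQyx Hne => Pyx.
by move: (Pirr x); rewrite (Ptr Pxy Pyx).
Qed.

Lemma strat_valid : valid_strategy strat.
Proof. move=> h _; exact: strat_unranked. Qed.

Lemma strat_regret_free : ranking pref -> regret_free pref strat.
Proof.
move=> Hpref W' HW' R' [h [Hg [Ht Heq]]].
have [HB Hinv] := inv_any HW' Hg.
have [_ HWas] := tournamentP HW'.
have Htot := totalP Ht.
case: HB => Qirr Qtr _.
apply: unimp => //.
- by move=> x; rewrite -Heq.
- by move=> x y z; rewrite -!Heq; apply: Qtr.
- by move=> x y Hne; rewrite -!Heq; apply: Htot.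
move=> x y Pxy Wxy; rewrite -Heq.
have Hne : x != y by apply/eqP => E; move: (Pirr x); rewrite {2}E Pxy.
case/orP: (Htot _ _ Hne) => // Qyx.
by move: (HWas _ _ Wxy); rewrite (Hinv _ _ Qyx Pxy).
Qed.

Fixpoint run n : seq (X * X) :=
  if n is n'.+1 then
    let h := run n' in
    if totalb (relh h) then h else rcons h (play W (strat h))
  else [::].

Definition cnt Q := #|[pred q : X * X | Q q.1 q.2]|.

Lemma run_inv n : [/\ generated strat W (run n), Bub pref (relh (run n)),
  (forall x y, relh (run n) x y -> R x y) &
  (totalb (relh (run n)) \/ n <= cnt (relh (run n)))].
Proof.
elim: n => [|n [Hg HB Hs Hc]].
  split; [exact: generated_nil | exact: Bub_nil | by [] | by right].
rewrite /=; case: ifP => Ht; first by split => //; left.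
set h := run n; set p := play W (strat h).
have Hnt : ~~ totalb (relh h) by rewrite Ht.
have /andP [Hadj HRp] := strat_goodR HB Hs Hnt.
have Hq : p = strat h \/ p = ((strat h).2, (strat h).1) by exact: play_cases.
have [HB' _] := bub_step Pirr Ptot HB Hadj Hq.
split.
- by apply/generated_rcons.
- by apply: Bub_ext HB' => x y; exact: relh_step.
- move=> x y; rewrite relh_step /step; case/orP => [/Hs //|/andP [Hx Hy]].
  have Hx' : R x p.1 \/ x = p.1 by case/orP: Hx => [/eqP ->|/Hs]; [right|left].
  have Hy' : R p.2 y \/ y = p.2 by case/orP: Hy => [/eqP ->|/Hs]; [right|left].
  case: Hx' => [Rx|->]; case: Hy' => [Ry|->] //.
  + exact: Rtr (Rtr Rx HRp) Ry.
  + exact: Rtr Rx HRp.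
  + exact: Rtr HRp Ry.
- right; case: Hc => [Ht'|Hc]; first by rewrite Ht' in Hnt.
  apply: leq_ltn_trans Hc _.
  apply: (@card_lt _ _ _ p).
  + by move=> q /= Qq; rewrite relh_step /step Qq.
  + have Hu : unranked (relh h) p.1 p.2 by apply: unranked_play; case/and3P: Hadj.
    by case/and3P: Hu.
  + by rewrite /= relh_step /step !eqxx /= orbT.
Qed.

Lemma strat_outcome : outcome strat W R.
Proof.
have [Hg HB Hs Hc] := run_inv #|{: X * X}|.+1.
exists (run #|{: X * X}|.+1); split => //.
have Ht : totalb (relh (run #|{: X * X}|.+1)).
  case: Hc => // Hc; move: (max_card (mem [pred q : X * X | relh (run #|{: X * X}|.+1) q.1 q.2])).
  by rewrite /cnt in Hc; rewrite leqNgt (leq_trans _ Hc).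
split => // x y; apply/idP/idP => [/Hs //|Rxy].
have Hne : x != y by apply/eqP => E; move: (Rirr x); rewrite {2}E Rxy.
case/orP: (totalP Ht Hne) => // /Hs Ryx.
by move: (Rirr x); rewrite (Rtr Rxy Ryx).
Qed.

End Main.

Unset Implicit Arguments. Set Strict Implicit.

Theorem proposition1 (X : finType) (pref : rel X) (Hpref : ranking pref)
  (W : rel X) (HW : tournament W) (R : rel X) (HR : ranking R)
  (Hfeas : feasible W R) (Heff : efficient pref W R) :
  exists s : strategy X,
    valid_strategy s /\ regret_free pref s /\ outcome s W R.
Proof.
have [s0 [Hv0 [h0 [Hg0 [Ht0 Heq0]]]]] := Hfeas.
have [Pirr Ptr Ptot] := rankingP Hpref.
have [Rirr Rtr Rtot] := rankingP HR.
have [_ _ Hwb] := gen_inv Hv0 HW Hg0.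
have Hcons : forall a b, R a b -> (forall c, ~~ (R a c && R c b)) -> W a b.
  move=> a b; rewrite -Heq0 => Rab Hnb.
  case: (Hwb _ _ Rab) => // [[c [Hac Hcb]]].
  by move: (Hnb c); rewrite -!Heq0 Hac Hcb.
exists (strat pref W R s0); split; first exact: strat_valid.
split; first exact: strat_regret_free.
exact: strat_outcome.
Qed.
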